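(* (1) In the basic and the lazy model, no algorithm solves the location discovery problem in fewer than $n-1$ rounds in the worst case. (2) In the perceptive model, no algorithm solves the location discovery problem in fewer than $n/2$ rounds in the worst case.
   Context: Model: $n$ agents are at distinct, arbitrary initial positions on a circle of circumference $1$ and act in synchronised unit-time rounds. Each agent has its own notion of right (clockwise) and left. At the start of a round each agent chooses a direction and moves at unit speed. Agents never pass: two moving agents that collide instantly reverse direction, and a moving agent hitting an idle one becomes idle while the idle one starts moving in the former's objective direction. There is no communication. At the end of each round every agent learns $\mathrm{dist}()$, the clockwise distance, in its own orientation, from its start-of-round to its end-of-round position. The three models differ as follows: - Basic: directions are in $\{\text{right},\text{left}\}$. - Lazy: directions are in $\{\text{idle},\text{right},\text{left}\}$. - Perceptive: as basic, but each agent additionally learns $\mathrm{coll}()$, the distance from its start position to its first collision in the round. Location discovery problem: each agent must determine the initial positions of all other agents relative to its own initial position. *)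

(* Defs.v *)
From mathcomp Require Import all_boot all_order all_algebra.
From mathcomp Require Import reals.
Set Implicit Arguments. Unset Strict Implicit. Unset Printing Implicit Defensive.
Import Order.TTheory GRing.Theory Num.Theory.
Local Open Scope ring_scope.

Inductive model := Basic | Lazy | Perceptive.

(** A direction chosen by an agent, in its OWN orientation. *)
Inductive dir := Idle | Right | Left.

Section LocationDiscovery.
Variable R : realType.
Variable n : nat.

(** Fractional part: points of the circle of circumference 1 are reals mod 1. *)
Definition frac (x : R) : R := x - (Num.floor x)%:~R.

Definition cwd (x y : R) : R := frac (y - x).

(** Clockwise distance from x to y in the orientation of an agent of
    chirality ch (ch = true : the agent's "right" is the global clockwise). *)
Definition owndist (ch : bool) (x y : R) : R := if ch then cwd x y else cwd y x.

Record config := Config { cpos : 'I_n -> R; cchir : 'I_n -> bool }.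

Definition valid_config (c : config) : Prop :=
  (forall k, 0 <= cpos c k < 1) /\ injective (cpos c).

(** What an agent observes at the end of a round: dist(), and, in the
    perceptive model only, coll() (None when the agent has no collision,
    and always None in the basic and lazy models). *)
Record obs := Obs { odist : R; ocoll : option R }.

(** An algorithm: for each agent, a choice of direction as a function of its
    own history of observations, and a final output (the list of clockwise
    distances, in its own orientation, from its initial position to the initial
    positions of the other agents).  Strategies may differ between agents
    (this covers agents with identities and randomised algorithms with fixed
    coin outcomes). *)
Record algorithm := Alg {
  strat  : 'I_n -> seq obs -> dir;
  output : 'I_n -> seq obs -> seq R }.

Definition valid_alg (M : model) (A : algorithm) : Prop :=
  M <> Lazy -> forall k h, strat A k h <> Idle.

Definition gvel (ch : bool) (d : dir) : int :=
  match d with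
  | Idle => 0
  | Right => if ch then 1 else -1
  | Left => if ch then -1 else 1
  end.

Definition rank (p : 'I_n -> R) (k j : 'I_n) : nat :=
  #|[pred m : 'I_n | cwd (p k) (p m) < cwd (p k) (p j)]|.

Definition target (p : 'I_n -> R) (s : int) (k : 'I_n) : 'I_n :=
  odflt k [pick j | rank p k j == `|(s %% (n%:Z))%Z|%N].

(** Net rotation of a round: with collisions (bounces / baton passing with idle
    agents) the agents behave as non-interacting virtual particles exchanging
    identities; since every moving particle travels exactly once around the
    circle, the set of positions is preserved and every agent moves
    (#clockwise movers - #counterclockwise movers) steps clockwise in the cyclic
    order of agents. *)
Definition rotation (ch : 'I_n -> bool) (d : 'I_n -> dir) : int :=
  \sum_(k < n) gvel (ch k) (d k).

Definition newpos (p : 'I_n -> R) (ch : 'I_n -> bool) (d : 'I_n -> dir) :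
  'I_n -> R := fun k => p (target p (rotation ch d) k).

(** Distance travelled by agent k before its first collision: the first
    collision of k happens when its virtual particle meets an oppositely moving
    one, i.e. at half the gap (in k's direction of motion) to the closest
    oppositely moving agent. *)
Definition meetdist (p : 'I_n -> R) (v : int) (k j : 'I_n) : R :=
  (if v == 1 then cwd (p k) (p j) else cwd (p j) (p k)) / 2.

Definition first_coll (p : 'I_n -> R) (ch : 'I_n -> bool) (d : 'I_n -> dir)
  (k : 'I_n) : option R :=
  let v := gvel (ch k) (d k) in
  let opp := [pred j : 'I_n | (v != 0) && (gvel (ch j) (d j) == - v)] in
  if [exists j, opp j]
  then Some (\big[Order.min/1]_(j | opp j) meetdist p v k j)
  else None.

Definition observe (M : model) (p : 'I_n -> R) (ch : 'I_n -> bool)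
  (d : 'I_n -> dir) (k : 'I_n) : obs :=
  Obs (owndist (ch k) (p k) (newpos p ch d k))
      (if M is Perceptive then first_coll p ch d k else None).

Fixpoint run (M : model) (A : algorithm) (c : config) (r : nat) :
  ('I_n -> R) * ('I_n -> seq obs) :=
  match r with
  | 0 => (cpos c, fun _ => [::])
  | r'.+1 =>
      let ph := run M A c r' in
      let p := ph.1 in let h := ph.2 in
      let d := fun k => strat A k (h k) in
      (newpos p (cchir c) d, fun k => rcons (h k) (observe M p (cchir c) d k))
  end.

Definition rel_positions (c : config) (k : 'I_n) : seq R :=
  [seq owndist (cchir c k) (cpos c k) (cpos c j) | j <- enum 'I_n & j != k].

Definition solves (M : model) (A : algorithm) (T : nat) : Prop :=
  forall c, valid_config c -> forall k : 'I_n,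
    perm_eq (output A k ((run M A c T).2 k)) (rel_positions c k).

End LocationDiscovery.

(* Main.v *)
Require Import Defs.
From mathcomp Require Import all_boot all_order all_algebra.
From mathcomp Require Import reals.
From mathcomp Require Import ring lra zify.
Set Implicit Arguments. Unset Strict Implicit. Unset Printing Implicit Defensive.
From Stdlib Require Import Classical FunctionalExtensionality.
Import Order.TTheory GRing.Theory Num.Theory.
Local Open Scope ring_scope.

Section Grid.
Variable R : realType.

Lemma frac_shift (y : R) (m : int) : m%:~R <= y < (m + 1)%:~R -> Defs.frac y = y - m%:~R.
Proof. by move=> H; rewrite /Defs.frac (floor_def H). Qed.

Lemma frac_id (y : R) : 0 <= y < 1 -> Defs.frac y = y.
Proof. by move=> H; rewrite (@frac_shift y 0) ?subr0 //= add0r. Qed.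

Lemma frac_m1 (y : R) : 0 <= y < 1 -> Defs.frac (y - 1) = y.
Proof.
move=> /andP[H1 H2]; rewrite (@frac_shift _ (-1)).
  by rewrite intrN /= opprK subrK.
by rewrite intrD intrN /=; apply/andP; split; lra.
Qed.

Variable n : nat.
Hypothesis n_gt0 : (0 < n)%N.
Variable Mg : nat.

Definition uu (g : {ffun 'I_n -> 'I_Mg}) (a : 'I_n) : R := (g a)%:R / (2 * Mg)%:R.
Definition gp g (a : 'I_n) : R := (a%:R + uu g a) / n%:R.
Definition X (a b : 'I_n) : nat := (b + n - a) %% n.

Lemma uu_bounds g a : 0 <= uu g a < 2^-1.
Proof.
have hM : (0 < Mg)%N by case: (g a) => /= m; case: Mg.
rewrite /uu divr_ge0 ?ler0n //=.
rewrite ltr_pdivrMr ?ltr0n ?muln_gt0 //= natrM.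
have := ltn_ord (g a); rewrite -(ltr_nat R) => h.
rewrite mulrA mulVf ?mul1r //; by rewrite pnatr_eq0.
Qed.

Lemma Xle (a b : 'I_n) : (a <= b)%N -> X a b = (b - a)%N.
Proof.
move=> h; rewrite /X -addnBAC // modnDr modn_small //.
have := ltn_ord b; lia.
Qed.

Lemma Xgt (a b : 'I_n) : (b < a)%N -> X a b = (b + n - a)%N.
Proof.
move=> h; rewrite /X modn_small //; have := ltn_ord a; lia.
Qed.

Lemma cwd_grid g a b :
  cwd (gp g a) (gp g b) = ((X a b)%:R + uu g b - uu g a) / n%:R.
Proof.
have hn : 0 < n%:R :> R by rewrite ltr0n.
have [ua1 ua2] := andP (uu_bounds g a).
have [ub1 ub2] := andP (uu_bounds g b).
have eq1 : gp g b - gp g a = (b%:R - a%:R + uu g b - uu g a) / n%:R.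
  by rewrite /gp; field; rewrite pnatr_eq0 -lt0n.
rewrite /cwd eq1.
case: (leqP a b) => hab.
  rewrite Xle // natrB //.
  apply: frac_id; apply/andP; split.
    apply: divr_ge0; last exact: ltW.
    case: (eqVneq a b) => [->|nab]; first by rewrite subrr add0r subrr.
    have : (a < b)%N by rewrite ltn_neqAle hab andbT; apply/eqP => /val_inj; apply/eqP.
    rewrite -addn1 -(ler_nat R) natrD => h. lra.
  rewrite ltr_pdivrMr // mul1r.
  have := ltn_ord b; rewrite -addn1 -(ler_nat R) natrD => h.
  have := ler0n R a. lra.
rewrite Xgt // natrB; last by have := ltn_ord a; lia.
rewrite natrD.
have -> : (b%:R - a%:R + uu g b - uu g a) / n%:R =
   ((b%:R + n%:R - a%:R + uu g b - uu g a) / n%:R) - 1 :> R.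
  by field; rewrite pnatr_eq0 -lt0n.
apply: frac_m1; apply/andP; split.
  apply: divr_ge0; last exact: ltW.
  have := ltn_ord a; rewrite -addn1 -(ler_nat R) natrD => h. have := ler0n R b. lra.
rewrite ltr_pdivrMr // mul1r.
move: hab; rewrite -addn1 -(ler_nat R) natrD => h. lra.
Qed.


Lemma X_inj1 a b c : X a b = X a c -> b = c.
Proof.
move=> h; apply: val_inj => /=; move: h.
have := ltn_ord a; have := ltn_ord b; have := ltn_ord c.
case: (leqP a b) => h1; case: (leqP a c) => h2;
  rewrite ?(Xle h1) ?(Xle h2) ?(Xgt h1) ?(Xgt h2); lia.
Qed.

Lemma X_inj2 a b c : X b a = X c a -> b = c.
Proof.
move=> h; apply: val_inj => /=; move: h.
have := ltn_ord a; have := ltn_ord b; have := ltn_ord c.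
case: (leqP b a) => h1; case: (leqP c a) => h2;
  rewrite ?(Xle h1) ?(Xle h2) ?(Xgt h1) ?(Xgt h2); lia.
Qed.

Lemma cmp_gen (x1 x2 : nat) (e1 e2 : R) : -1 < e1 - e2 < 1 -> x1 <> x2 ->
  (x1%:R + e1 < x2%:R + e2) = (x1 < x2)%N.
Proof.
move=> /andP[h1 h2] hne; case: (ltnP x1 x2) => h.
  move: h; rewrite -addn1 -(ler_nat R) natrD => h; lra.
have : (x2 < x1)%N by rewrite ltn_neqAle h andbT; apply/eqP => e; apply: hne.
rewrite -addn1 -(ler_nat R) natrD => h'; apply/negbTE; rewrite -leNgt; lra.
Qed.

Lemma cmp1 g x y1 y2 :
  (cwd (gp g x) (gp g y1) < cwd (gp g x) (gp g y2)) = (X x y1 < X x y2)%N.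
Proof.
rewrite !cwd_grid ltr_pM2r ?invr_gt0 ?ltr0n //.
case: (eqVneq y1 y2) => [->|ne]; first by rewrite ltxx ltnn.
have [a1 a2] := andP (uu_bounds g y1); have [b1 b2] := andP (uu_bounds g y2).
rewrite -!addrA; apply: cmp_gen; first (apply/andP; split; lra).
by move=> /X_inj1 e; rewrite e eqxx in ne.
Qed.

Lemma cmp2 g x y1 y2 :
  (cwd (gp g y1) (gp g x) < cwd (gp g y2) (gp g x)) = (X y1 x < X y2 x)%N.
Proof.
rewrite !cwd_grid ltr_pM2r ?invr_gt0 ?ltr0n //.
case: (eqVneq y1 y2) => [->|ne]; first by rewrite ltxx ltnn.
have [a1 a2] := andP (uu_bounds g y1); have [b1 b2] := andP (uu_bounds g y2).
rewrite -!addrA; apply: cmp_gen; first (apply/andP; split; lra).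
by move=> /X_inj2 e; rewrite e eqxx in ne.
Qed.

Lemma gp_bounds g a : 0 <= gp g a < 1.
Proof.
have [u1 u2] := andP (uu_bounds g a).
rewrite /gp divr_ge0 ?ler0n ?addr_ge0 //= ltr_pdivrMr ?ltr0n // mul1r.
have := ltn_ord a; rewrite -addn1 -(ler_nat R) natrD => h; lra.
Qed.

Lemma gp_inj g : injective (gp g).
Proof.
move=> a b; rewrite /gp => /(congr1 ( *%R^~ n%:R)).
rewrite !mulfVK ?pnatr_eq0 -?lt0n // => e.
have [a1 a2] := andP (uu_bounds g a); have [b1 b2] := andP (uu_bounds g b).
apply: val_inj => /=; apply/eqP; rewrite eqn_leq; apply/andP; split;
  rewrite leqNgt; apply/negP; rewrite -addn1 -(ler_nat R) natrD => h; lra.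
Qed.

End Grid.
Lemma pigeon (n' M : nat) (C : finType) (F : {ffun 'I_n' -> 'I_M} -> C)
  (m : C -> 'I_n') : (0 < n')%N -> (#|C| < M)%N ->
  exists g g', [/\ F g = F g', g != g' & forall i, i != m (F g) -> g i = g' i].
Proof.
case: n' F m => // n' F m _.
move=> hC; apply: NNPP => H.
pose h (g : {ffun 'I_n'.+1 -> 'I_M}) : C * {ffun 'I_n' -> 'I_M} := (F g, [ffun i : 'I_n' => g (lift (m (F g)) i)]).
have hinj : injective h.
  move=> g g' [e1 e2]; case: (eqVneq g g') => // ne; exfalso; apply: H.
  exists g, g'; split => // i ni.
  rewrite eq_sym in ni; have [k hk _] := unlift_some ni.
  have := congr1 (fun f : {ffun 'I_n' -> 'I_M} => f (k : 'I_n')) e2; rewrite !ffunE -e1 -hk => ->; by [].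
have := @leq_card _ _ h hinj; rewrite card_prod !card_ffun !card_ord.
rewrite expnS => h2.
have : (#|C| * M ^ n' < M * M ^ n')%N.
  by rewrite ltn_mul2r hC andbT expn_gt0; move: hC; case: (M) => //.
by rewrite ltnNge h2.
Qed.

Section Main.
Variable R : realType.
Variable n : nat.
Hypothesis n_gt0 : (0 < n)%N.
Variable M : model.
Variable A : algorithm R n.
Variable T : nat.
Variable ch : 'I_n -> bool.

Definition enc (d : dir) : 'I_3 :=
  match d with Idle => @Ordinal 3 0 isT | Right => @Ordinal 3 1 isT | Left => @Ordinal 3 2 isT end.
Definition dec (o : 'I_3) : dir :=
  match val o with 0 => Idle | 1 => Right | _ => Left end.
Lemma encK : cancel enc dec. Proof. by case. Qed.

Definition Col := {ffun 'I_T -> {ffun 'I_n -> 'I_3}}.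
Variable m0 : nat.
Definition Mg := m0.+1.
Definition grid := {ffun 'I_n -> 'I_Mg}.

Definition dirs (c : Col) (r : nat) (i : 'I_n) : dir :=
  match @insub _ (fun r => r < T)%N _ r with Some r' => dec (c r' i) | None => Idle end.

Definition base : 'I_n -> R := gp R [ffun => ord0 : 'I_Mg].

Fixpoint pi (c : Col) (r : nat) : 'I_n -> 'I_n :=
  match r with
  | 0 => id
  | r'.+1 => let p := pi c r' in
             fun i => p (target (fun a => base (p a)) (rotation ch (dirs c r')) i)
  end.

Definition cfg (g : grid) : config R n := Config (gp R g) ch.

Definition Fc (g : grid) : Col :=
  [ffun r : 'I_T => [ffun i => enc (strat A i ((run M A (cfg g) r).2 i))]].

Lemma target_eq (p q : 'I_n -> R) s :
  (forall a b c, (cwd (p a) (p b) < cwd (p a) (p c)) = (cwd (q a) (q b) < cwd (q a) (q c))) ->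
  target p s = target q s.
Proof.
move=> H; apply: functional_extensionality => k.
rewrite /target; congr odflt; apply: eq_pick => j /=; congr (_ == _).
by rewrite /rank; apply: eq_card => m; rewrite !inE H.
Qed.

Lemma target_grid (g : grid) (pp : 'I_n -> 'I_n) s :
  target (fun a => gp R g (pp a)) s = target (fun a => base (pp a)) s.
Proof. by apply: target_eq => a b c; rewrite /base !cmp1. Qed.

Lemma dirsE g r : (r < T)%N -> dirs (Fc g) r = fun i => strat A i ((run M A (cfg g) r).2 i).
Proof.
move=> hr; apply: functional_extensionality => i.
by rewrite /dirs insubT /Fc !ffunE encK.
Qed.

Lemma pos_run g r : (r <= T)%N -> (run M A (cfg g) r).1 = (fun i => gp R g (pi (Fc g) r i)).
Proof.
elim: r => [|r IH] hr; first reflexivity.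
have hr' : (r < T)%N by exact: hr.
have -> : (run M A (cfg g) r.+1).1 =
  newpos (run M A (cfg g) r).1 ch (fun i => strat A i ((run M A (cfg g) r).2 i))
  by reflexivity.
rewrite (IH (ltnW hr)) -(dirsE g hr') /newpos.
apply: functional_extensionality => i.
by rewrite target_grid.
Qed.


Section MinLemmas.
Variable (I : finType).
Lemma Lmin_le1 (P : pred I) (F : I -> R) : \big[Order.min/1]_(i | P i) F i <= 1.
Proof. by apply: (big_rec (fun x => x <= 1)) => // i x _ hx; rewrite ge_min hx orbT. Qed.

Lemma Lmin_lb (P : pred I) (F : I -> R) i0 : P i0 -> \big[Order.min/1]_(i | P i) F i <= F i0.
Proof. by move=> h; rewrite (bigD1 i0) //= ge_min lexx. Qed.

Lemma Lmin_glb (P : pred I) (F : I -> R) y : (forall i, P i -> y <= F i) -> y <= 1 ->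
  y <= \big[Order.min/1]_(i | P i) F i.
Proof.
move=> H h1; apply: (big_rec (fun x => y <= x)) => // i x hi hx.
by rewrite le_min hx H.
Qed.

Lemma Lmin_drop (P Z : pred I) (F : I -> R) :
  (forall i, P i -> Z i -> exists a, [/\ P a, ~~ Z a & F a <= F i]) ->
  \big[Order.min/1]_(i | P i) F i = \big[Order.min/1]_(i | P i && ~~ Z i) F i.
Proof.
move=> H; apply/eqP; rewrite eq_le; apply/andP; split.
  apply: Lmin_glb; last exact: Lmin_le1.
  by move=> i /andP[hp _]; apply: Lmin_lb.
apply: Lmin_glb; last exact: Lmin_le1.
move=> i hp; case hz: (Z i).
  have [a [pa za le]] := H i hp hz.
  by apply: le_trans le; apply: Lmin_lb; rewrite pa za.
by apply: Lmin_lb; rewrite hp hz.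
Qed.
End MinLemmas.

Variable k : 'I_n.

Definition vk (c : Col) r := gvel (ch k) (dirs c r k).
Definition Sopp (c : Col) r := [pred j : 'I_n | (vk c r != 0) && (gvel (ch j) (dirs c r j) == - vk c r)].
Definition fb (c : Col) r i := meetdist (fun a => base (pi c r a)) (vk c r) k i.
Definition viol (c : Col) r (j : 'I_n) : bool :=
  if M is Perceptive then
    [exists i, [&& Sopp c r i, pi c r i == j &
       [forall a, (Sopp c r a && (pi c r a != j)) ==> (fb c r i < fb c r a)]]]
  else false.
Definition revealed (c : Col) : {set 'I_n} :=
  k |: ([set pi c r.+1 k | r : 'I_T] :|: [set j | [exists r : 'I_T, viol c r j]]).

Lemma meet_cmp (g : grid) c r v x y :
  (meetdist (fun a => gp R g (pi c r a)) v k x < meetdist (fun a => gp R g (pi c r a)) v k y) =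
  (meetdist (fun a => base (pi c r a)) v k x < meetdist (fun a => base (pi c r a)) v k y).
Proof.
rewrite /meetdist !ltr_pM2r ?invr_gt0 ?ltr0n //.
by case: (v == 1); rewrite /base ?cmp1 ?cmp2.
Qed.

Lemma gp_eq (g g' : grid) x : g x = g' x -> gp R g x = gp R g' x.
Proof. by rewrite /gp /uu => ->. Qed.

Lemma coll_eq (g g' : grid) c r j :
  (forall x, x != j -> g x = g' x) -> pi c r k != j -> M = Perceptive -> ~~ viol c r j ->
  first_coll (fun a => gp R g (pi c r a)) ch (dirs c r) k =
  first_coll (fun a => gp R g' (pi c r a)) ch (dirs c r) k.
Proof.
move=> hg hk hM; rewrite /viol hM => hv.
rewrite /first_coll; case: ifP => // _; congr Some.
set Z := [pred i | pi c r i == j].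
have key : forall (h : grid) i, Sopp c r i -> Z i -> exists a, [/\ Sopp c r a, ~~ Z a &
   meetdist (fun a => gp R h (pi c r a)) (vk c r) k a <=
   meetdist (fun a => gp R h (pi c r a)) (vk c r) k i].
  move=> h i hs hz; have hz' : pi c r i == j := hz.
  move: hv; rewrite negb_exists => /forallP /(_ i); rewrite hs hz' /= negb_forall.
  move=> /existsP [a]; rewrite negb_imply => /andP [/andP [ha1 ha2] ha3].
  exists a; split => //; rewrite leNgt meet_cmp; exact: ha3.
rewrite (Lmin_drop (key g)) (Lmin_drop (key g')).
apply: eq_bigr => i /andP [_ hz].
by rewrite /meetdist !(@gp_eq g g') //; apply: hg.
Qed.


Lemma pi_rev c r j : j \notin revealed c -> (r <= T)%N -> pi c r k != j.
Proof.
move=> hj; case: r => [|r] hr.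
  by apply/eqP => e; move: hj; rewrite /revealed -e setU11.
apply/eqP => e; move: hj; rewrite /revealed !inE; apply/negP/negPn.
apply/orP; right; apply/orP; left; apply/imsetP.
by exists (Ordinal hr) => //; rewrite e.
Qed.

Lemma viol_rev c r j : j \notin revealed c -> (r < T)%N -> ~~ viol c r j.
Proof.
move=> hj hr; apply/negP => hv; move: hj; rewrite /revealed !inE; apply/negP/negPn.
apply/orP; right; apply/orP; right; apply/existsP; exists (Ordinal hr); exact: hv.
Qed.

Lemma hist_eq (g g' : grid) j :
  Fc g' = Fc g -> (forall x, x != j -> g x = g' x) -> j \notin revealed (Fc g) ->
  forall r, (r <= T)%N -> (run M A (cfg g) r).2 k = (run M A (cfg g') r).2 k.
Proof.
move=> hF hg hj; elim=> [|r IH] hr; first reflexivity.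
have hr' : (r < T)%N by exact: hr.
have E : forall h : grid, (run M A (cfg h) r.+1).2 k =
   rcons ((run M A (cfg h) r).2 k)
     (observe M (run M A (cfg h) r).1 ch (fun i => strat A i ((run M A (cfg h) r).2 i)) k)
   by move=> h; reflexivity.
have N : forall h : grid, newpos (run M A (cfg h) r).1 ch (fun i => strat A i ((run M A (cfg h) r).2 i))
   = (run M A (cfg h) r.+1).1 by move=> h; reflexivity.
rewrite !E (IH (ltnW hr)); congr rcons.
rewrite /observe !N !(pos_run _ hr) !(pos_run _ (ltnW hr)) -!(dirsE _ hr') hF.
have h1 := pi_rev hj (ltnW hr); have h2 := pi_rev hj hr.
rewrite !(@gp_eq g g' (pi _ r k)) ?(@gp_eq g g' (pi _ r.+1 k)); try by apply: hg.
congr Obs; case hM: M => //.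
apply: coll_eq => //; [exact: hg | exact: h1 | exact: (viol_rev hj hr')].
Qed.


Definition Bv (c : Col) : {set 'I_n} := [set j | [exists r : 'I_T, viol c r j]].

Lemma viol_uniq c r j1 j2 : viol c r j1 -> viol c r j2 -> j1 = j2.
Proof.
rewrite /viol; case: M => //.
move=> /existsP [i1 /and3P [s1 e1 f1]] /existsP [i2 /and3P [s2 e2 f2]].
apply/eqP; apply: contraT => ne.
have h1 := implyP (forallP f1 i2); have h2 := implyP (forallP f2 i1).
have a1 : fb c r i1 < fb c r i2 by apply: h1; rewrite s2 (eqP e2) eq_sym ne.
have a2 : fb c r i2 < fb c r i1 by apply: h2; rewrite s1 (eqP e1) ne.
by move: (lt_trans a1 a2); rewrite ltxx.
Qed.

Lemma card_rev c : (#|revealed c| <= 1 + T + #|Bv c|)%N.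
Proof.
rewrite /revealed cardsU1.
have hA : (#|[set pi c r.+1 k | r : 'I_T]| <= T)%N.
  by apply: leq_trans (leq_imset_card _ _) _; rewrite card_ord.
have hU := cardsUI [set pi c r.+1 k | r : 'I_T] (Bv c).
rewrite -/(Bv c).
have : (#|[set pi c r.+1 k | r : 'I_T] :|: Bv c| <= T + #|Bv c|)%N.
  by apply: leq_trans (leq_addr #|[set pi c r.+1 k | r : 'I_T] :&: Bv c| _) _; rewrite hU leq_add2r.
by move=> h; apply: leq_trans (leq_add (leq_b1 _) h) _; rewrite addnA.
Qed.

Lemma card_Bv_basic c : M <> Perceptive -> #|Bv c| = 0%N.
Proof.
move=> hM; apply/eqP; rewrite cards_eq0; apply/eqP/setP => j; rewrite !inE.
apply/negbTE/existsPn => r; rewrite /viol; by case: M hM.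
Qed.

Lemma card_Bv_perc c : (forall j, ~~ viol c 0 j) -> (#|Bv c| <= T.-1)%N.
Proof.
move=> h0.
case hT: T => [|T'].
  apply: eq_leq; apply/eqP; rewrite cards_eq0; apply/eqP/setP => j; rewrite !inE.
  apply/negbTE/existsPn => -[r hr]; exfalso; by move: (hr); rewrite hT.
have r0lt : (0 < T)%N by rewrite hT.
pose r0 := Ordinal r0lt.
pose f (r : 'I_T) := odflt k [pick j | viol c r j].
have sub : Bv c \subset f @: [set~ r0].
  apply/subsetP => j; rewrite inE => /existsP [r hv].
  apply/imsetP; exists r.
    rewrite !inE; apply/eqP => e; move: hv; rewrite e /r0; apply/negP; exact: h0.
  rewrite /f; case: pickP => [j' hj'|/(_ j)]; last by rewrite hv.
  by rewrite /= (viol_uniq hv hj').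
apply: leq_trans (subset_leq_card sub) _.
apply: leq_trans (leq_imset_card _ _) _.
by rewrite cardsC1 card_ord hT.
Qed.

Lemma exists_unrev c : (#|revealed c| < n)%N -> exists j, j \notin revealed c.
Proof.
move=> h; case: (pickP [pred j | j \notin revealed c]) => [j hj|H]; first by exists j.
exfalso; have : [set: 'I_n] \subset revealed c.
  by apply/subsetP => x _; move: (H x) => /= /negbFE.
move/subset_leq_card; rewrite cardsT card_ord; lia.
Qed.


Lemma viol0 g j : valid_alg M A ->
  (forall i, ch i = if strat A i [::] is Right then true else false) ->
  ~~ viol (Fc g) 0 j.
Proof.
move=> hv hch; rewrite /viol; case hM: M => //.
apply/existsPn => i; apply/negP => /and3P [hs _ _]; move: hs.
rewrite /Sopp /vk /=.
case: (ltnP 0 T) => hT; last first.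
  by rewrite /dirs insubF //= ltnNge hT.
rewrite (dirsE g hT) /=.
have G : forall x, gvel (ch x) (strat A x [::]) = 1.
  move=> x; rewrite hch; case e: (strat A x [::]) => //.
  by exfalso; apply: (hv _ x [::] e); rewrite hM.
by rewrite !G.
Qed.

Lemma lt_sum_shift (u v : R) (x : nat) : (x%:R + u) / n%:R = (x%:R + v) / n%:R -> u = v.
Proof.
move=> /(congr1 ( *%R^~ n%:R)); rewrite !mulfVK ?pnatr_eq0 -?lt0n //.
by move=> /addrI.
Qed.

Lemma core : (#|Col| <= m0)%N -> (forall g, (#|revealed (Fc g)| < n)%N) -> ~ solves M A T.
Proof.
move=> hm hrev hS.
pose mp (c : Col) := odflt k [pick j | j \notin revealed c].
have hC : (#|Col| < Mg)%N by [].
have [g [g' [hF hne hag]]] := @pigeon n Mg Col Fc mp n_gt0 hC.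
set j := mp (Fc g) in hag.
have hj : j \notin revealed (Fc g).
  rewrite /j /mp; case: pickP => [x hx //|H].
  have [x hx] := exists_unrev (hrev g).
  by move: (H x); rewrite /= hx.
have hk : k != j by apply/eqP => e; move: hj; rewrite -e /revealed setU11.
have hist := hist_eq (esym hF) hag hj (leqnn T).
have vc : forall h : grid, valid_config (cfg h).
  by move=> h; split; [exact: gp_bounds | exact: gp_inj].
have v1 := hS _ (vc g) k; have v2 := hS _ (vc g') k.
rewrite hist in v1.
rewrite perm_sym in v1; have P := perm_trans v1 v2.
have := @perm_big R +%R 0 R _ _ xpredT id P.
rewrite /rel_positions !big_map !big_filter /=.
rewrite !big_enum_cond /=.
have hk' : j != k by rewrite eq_sym.
rewrite (bigD1 j hk') [in RHS](bigD1 j hk') /=.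
have gk : gp R g k = gp R g' k by apply: gp_eq; apply: hag; rewrite eq_sym.
rewrite (eq_bigr (fun i => owndist (ch k) (gp R g' k) (gp R g' i))); last first.
  move=> i /andP [_ hi]; rewrite gk (@gp_eq g g' i) //; exact: hag.
move/addIr; rewrite /owndist /= => E.
have ek : uu R g k = uu R g' k by rewrite /uu (hag k) // eq_sym.
have eu : uu R g j = uu R g' j.
  move: E; case: (ch k) => /=; rewrite !cwd_grid // -!addrA => E.
    have := lt_sum_shift E; rewrite ek; exact: addIr.
  have := lt_sum_shift E; rewrite ek => /addrI; exact: oppr_inj.
have ej : g j = g' j.
  move: eu; rewrite /uu => /(congr1 ( *%R^~ (2 * Mg)%:R)).
  rewrite !mulfVK ?pnatr_eq0 // => /eqP; rewrite eqr_nat => /eqP; exact: val_inj.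
move: hne; apply/negP; rewrite negbK; apply/eqP/ffunP => i.
case: (eqVneq i j) => [->|ne] //; exact: hag.
Qed.

End Main.

Theorem lemma5 (R : realType) (n : nat) :
  (forall M : model, M = Basic \/ M = Lazy ->
     forall (A : algorithm R n) (T : nat),
       valid_alg M A -> (T < n.-1)%N -> ~ solves M A T) /\
  ((1 < n)%N ->
     forall (A : algorithm R n) (T : nat),
       valid_alg Perceptive A -> (2 * T < n)%N -> ~ solves Perceptive A T).
Proof.
split.
  move=> M hM A T hv hT.
  have n0 : (0 < n)%N by move: hT; case: (n).
  pose k := Ordinal n0.
  apply: (@core R n n0 M A T (fun _ => true) #|Col n T| k (leqnn _)) => g.
  apply: leq_ltn_trans (card_rev _ _ _ _ _ _) _.
  rewrite card_Bv_basic; last by case: hM => ->.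
  move: hT; case: (n) => // n'; rewrite /=; lia.
move=> hn A T hv hT.
have n0 : (0 < n)%N by apply: ltnW.
pose k := Ordinal n0.
pose ch := fun i : 'I_n => match strat A i [::] with Right => true | _ => false end.
apply: (@core R n n0 Perceptive A T ch #|Col n T| k (leqnn _)) => g.
apply: leq_ltn_trans (card_rev _ _ _ _ _ _) _.
have h := @card_Bv_perc R n Perceptive T ch #|Col n T| k (Fc Perceptive A T ch g)
   (fun j => @viol0 R n Perceptive A T ch #|Col n T| k g j hv (fun i => erefl)).
apply: leq_ltn_trans (leq_add (leqnn _) h) _.
move: hT hn; case: T {h g} => [|T'] /=; lia.
Qed.
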